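(* Let $G$ be a finitely generated group. If $IP_{Rat}(G\rtimes\mathbb{Z})$ is decidable, then $GBrP_{Rat}(G)$ is decidable.
   Context: For $\phi\in\mathrm{Aut}(G)$, $G\rtimes_\phi\mathbb{Z}$ is the group generated by $G$ and $t$ with $t^{-1}at=\phi(a)$ for $a\in G$. A subset of a finitely generated group is rational if it is the image of a rational (regular) language over the generators and their inverses (given by a finite automaton). $IP_{Rat}(G\rtimes\mathbb{Z})$: given $\phi\in\mathrm{Aut}(G)$ and two rational subsets of $G\rtimes_\phi\mathbb{Z}$, decide whether they intersect. $GBrP_{Rat}(G)$: given a rational subset $K\subseteq G$, $\phi\in\mathrm{Aut}(G)$ and $x\in G$, decide whether there exists $k$ with $\phi^k(x)\in K$. *)

(* Defs.v *)
(* Decidability is formalised through an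
   explicit Turing-complete model of computation (Minsky register machines)
   acting on the standard computable MathComp encoding [pickle] of instances. *)
From mathcomp Require Import all_boot ssralg ssrint.
Set Implicit Arguments. Unset Strict Implicit. Unset Printing Implicit Defensive.

Inductive instr : Type :=
| INC (r : nat)
| DEC (r : nat) (j : nat).

Definition program := seq instr.
Definition mstate : Type := (nat * (nat -> nat))%type.

Definition upd (R : nat -> nat) (r v : nat) : nat -> nat :=
  fun k => if k == r then v else R k.

Definition step (p : program) (s : mstate) : mstate :=
  let: (pc, R) := s in
  match nth (INC 0) p pc with
  | INC r => (pc.+1, upd R r (R r).+1)
  | DEC r j => match R r with
               | k.+1 => (pc.+1, upd R r k)
               | 0 => (j, R)
               end
  end.

Fixpoint exec (p : program) (fuel : nat) (s : mstate) : mstate :=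
  match fuel with
  | 0 => s
  | f.+1 => if s.1 < size p then exec p f (step p s) else s
  end.

Definition init_regs (n : nat) : nat -> nat := fun r => if r == 0 then n else 0.

Definition halts_with (p : program) (n out : nat) : Prop :=
  exists fuel, let s := exec p fuel (0, init_regs n) in
               size p <= s.1 /\ s.2 0 = out.

Definition decidable_on (I : countType) (valid : I -> Prop) (P : I -> Prop) : Prop :=
  exists p : program, forall x, valid x ->
    exists b : bool, halts_with p (pickle x) (nat_of_bool b) /\ (b <-> P x).

Record group_str (T : Type) := GroupStr {
  gmul : T -> T -> T;
  gone : T;
  ginv : T -> T;
  gmulA : forall a b c, gmul a (gmul b c) = gmul (gmul a b) c;
  gmul1g : forall a, gmul gone a = a;
  gmulg1 : forall a, gmul a gone = a;
  gmulVg : forall a, gmul (ginv a) a = gone;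
  gmulgV : forall a, gmul a (ginv a) = gone
}.

Definition is_aut (T : Type) (G : group_str T) (f : T -> T) : Prop :=
  (forall a b, f (gmul G a b) = gmul G (f a) (f b)) /\ bijective f.

(* Words over the generators gens = [g_0;...;g_{n-1}] and their inverses:
   letter 2i stands for g_i and letter 2i+1 for g_i^{-1}. *)
Definition word := seq nat.

Definition letterG (T : Type) (G : group_str T) (gens : seq T) (x : nat) : T :=
  if odd x then ginv G (nth (gone G) gens x./2) else nth (gone G) gens x./2.

Definition evalG (T : Type) (G : group_str T) (gens : seq T) (w : word) : T :=
  foldl (fun a x => gmul G a (letterG G gens x)) (gone G) w.

Definition word_over (k : nat) (w : word) : bool := all (fun x => x < k) w.

Definition generates (T : Type) (G : group_str T) (gens : seq T) : Prop :=
  forall a : T, exists w, word_over (2 * size gens) w /\ evalG G gens w = a.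

(* An automaton is (initial state, final states, transitions (p,letter,q)). *)
Definition nfa := (nat * seq nat * seq (nat * nat * nat))%type.

Fixpoint run (trans : seq (nat * nat * nat)) (p : nat) (w : word) (q : nat) : Prop :=
  match w with
  | [::] => p = q
  | x :: w' => exists p', (p, x, p') \in trans /\ run trans p' w' q
  end.

Definition accepts (A : nfa) (w : word) : Prop :=
  exists2 q, q \in A.1.2 & run A.2 A.1.1 w q.

Definition nfa_over (k : nat) (A : nfa) : bool := all (fun e => e.1.2 < k) A.2.

Definition represents_aut (T : Type) (G : group_str T) (gens : seq T)
    (phiw : seq word) (f : T -> T) : Prop :=
  is_aut G f /\ size phiw = size gens /\
  forall i, i < size gens -> f (nth (gone G) gens i) = evalG G gens (nth [::] phiw i).

Definition valid_aut_data (T : Type) (G : group_str T) (gens : seq T) (phiw : seq word) : Prop :=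
  all (word_over (2 * size gens)) phiw /\ exists f, represents_aut G gens phiw f.

(* The semidirect product G x|_phi Z, with t^{-1} a t = phi(a).        *)
(* Elements are written in normal form t^m a (m : int, a : G).  Words  *)
(* use the letters of G (< 2n), letter 2n for t and 2n+1 for t^{-1}.   *)
(* sd_step x s s' : s' is the normal form of (s * letter x).           *)
(* t^m a t = t^(m+1) phi(a);  t^m a t^-1 = t^(m-1) phi^-1(a).          *)
Definition sd_step (T : Type) (G : group_str T) (gens : seq T) (f : T -> T)
    (x : nat) (s s' : int * T) : Prop :=
  let n := size gens in
  if x < 2 * n then s'.1 = s.1 /\ s'.2 = gmul G s.2 (letterG G gens x)
  else if x == 2 * n then s'.1 = (s.1 + 1)%R /\ s'.2 = f s.2
  else if x == (2 * n).+1 then s'.1 = (s.1 - 1)%R /\ f s'.2 = s.2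
  else False.

Fixpoint sd_run (T : Type) (G : group_str T) (gens : seq T) (f : T -> T)
    (w : word) (s s' : int * T) : Prop :=
  match w with
  | [::] => s' = s
  | x :: w' => exists s'', sd_step G gens f x s s'' /\ sd_run G gens f w' s'' s'
  end.

Definition sd_eval (T : Type) (G : group_str T) (gens : seq T) (f : T -> T)
    (w : word) (s : int * T) : Prop := sd_run G gens f w (0%R, gone G) s.

(* instance: (automorphism data, automaton 1, automaton 2)             *)
Definition IP_instance := (seq word * nfa * nfa)%type.

Definition IP_valid (T : Type) (G : group_str T) (gens : seq T) (x : IP_instance) : Prop :=
  valid_aut_data G gens x.1.1 /\
  nfa_over (2 * size gens).+2 x.1.2 /\ nfa_over (2 * size gens).+2 x.2.

Definition IP_answer (T : Type) (G : group_str T) (gens : seq T) (x : IP_instance) : Prop :=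
  exists f, represents_aut G gens x.1.1 f /\
    exists u v s, accepts x.1.2 u /\ accepts x.2 v /\
                  sd_eval G gens f u s /\ sd_eval G gens f v s.

Definition IP_Rat_SD_decidable (T : Type) (G : group_str T) (gens : seq T) : Prop :=
  decidable_on (IP_valid G gens) (IP_answer G gens).

(* instance: (automaton for K, automorphism data, word for x)          *)
Definition GBrP_instance := (nfa * seq word * word)%type.

Definition GBrP_valid (T : Type) (G : group_str T) (gens : seq T) (x : GBrP_instance) : Prop :=
  nfa_over (2 * size gens) x.1.1 /\ valid_aut_data G gens x.1.2 /\
  word_over (2 * size gens) x.2.

Definition GBrP_answer (T : Type) (G : group_str T) (gens : seq T) (x : GBrP_instance) : Prop :=
  exists f, represents_aut G gens x.1.2 f /\
    exists (k : nat) (w : word), accepts x.1.1 w /\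
      evalG G gens w = iter k f (evalG G gens x.2).

Definition GBrP_Rat_decidable (T : Type) (G : group_str T) (gens : seq T) : Prop :=
  decidable_on (GBrP_valid G gens) (GBrP_answer G gens).

(* Main.v *)
Require Import Defs.
From mathcomp Require Import all_boot ssralg ssrint.
From mathcomp Require Import zify.
From Stdlib Require Import FunctionalExtensionality.
Set Implicit Arguments. Unset Strict Implicit. Unset Printing Implicit Defensive.

Inductive cmd := cSkip | cInc (r : nat) | cSeq (a b : cmd) | cIf (r : nat) (a b : cmd)
 | cFor (r : nat) (a : cmd).

Fixpoint csize c := match c with
 | cSkip => 0 | cInc _ => 1 | cSeq a b => csize a + csize b
 | cIf _ a b => csize b + csize a + 2 | cFor _ a => csize a + 2 end.

Fixpoint compile (off : nat) (c : cmd) : program := match c with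
 | cSkip => [::]
 | cInc r => [:: INC r]
 | cSeq a b => compile off a ++ compile (off + csize a) b
 | cIf r a b => DEC r (off + csize b + 2) :: compile off.+1 b ++
        DEC 1 (off + csize b + csize a + 2) :: compile (off + csize b + 2) a
 | cFor r a => DEC r (off + csize a + 2) :: compile off.+1 a ++ [:: DEC 1 off]
 end.

Fixpoint noZ c := match c with
 | cSkip => true | cInc r => r != 1 | cSeq a b => noZ a && noZ b
 | cIf r a b => [&& r != 1, noZ a & noZ b] | cFor r a => (r != 1) && noZ a end.

Definition regs := nat -> nat.

Inductive bs : cmd -> regs -> regs -> Prop :=
 | bsSkip R : bs cSkip R R
 | bsInc r R : bs (cInc r) R (upd R r (R r).+1)
 | bsSeq a b R R1 R2 : bs a R R1 -> bs b R1 R2 -> bs (cSeq a b) R R2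
 | bsIf0 r a b R R' : R r = 0 -> bs a R R' -> bs (cIf r a b) R R'
 | bsIfS r a b R k R' : R r = k.+1 -> bs b (upd R r k) R' -> bs (cIf r a b) R R'
 | bsFor0 r a R : R r = 0 -> bs (cFor r a) R R
 | bsForS r a R k R1 R2 : R r = k.+1 -> bs a (upd R r k) R1 -> bs (cFor r a) R1 R2 ->
     bs (cFor r a) R R2.

Lemma size_comp c off : size (compile off c) = csize c.
Proof.
elim: c off => //= [a IHa b IHb|r a IHa b IHb|r a IHa] off.
- by rewrite size_cat IHa IHb.
- rewrite size_cat /= IHa IHb; lia.
- rewrite size_cat /= IHa; lia.
Qed.

Lemma upd_eq R r v : upd R r v r = v. Proof. by rewrite /upd eqxx. Qed.
Lemma upd_neq R r v x : x != r -> upd R r v x = R x.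
Proof. by rewrite /upd => /negbTE ->. Qed.

Lemma bs_noZ c R R' : bs c R R' -> noZ c -> R' 1 = R 1.
Proof.
elim=> //=.
- by move=> r R0 nr; rewrite upd_neq // eq_sym.
- by move=> a b R0 R1 R2 _ IH1 _ IH2 /andP[/IH1 <- /IH2 ->].
- by move=> r a b R0 R1 _ _ IH /and3P[_ /IH].
- move=> r a b R0 k R1 _ _ IH /and3P[nr _ /IH ->]; by rewrite upd_neq // eq_sym.
- move=> r a R0 k R1 R2 _ _ IH1 _ IH2 H; rewrite IH2 //; case/andP: H => nr /IH1 ->.
  by rewrite upd_neq // eq_sym.
Qed.

Definition reach (P : program) (s s' : mstate) := exists f, exec P f s = s'.

Lemma exec_halted P f s : size P <= s.1 -> exec P f s = s.
Proof. by case: f => //= f; rewrite leqNgt => /negbTE ->. Qed.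

Lemma exec_add P a b s : exec P (a + b) s = exec P b (exec P a s).
Proof.
elim: a s => //= a IH s.
case: ifP => // /negbT; rewrite -leqNgt => h.
by rewrite !exec_halted.
Qed.

Lemma reach_trans P s1 s2 s3 : reach P s1 s2 -> reach P s2 s3 -> reach P s1 s3.
Proof. by move=> [a <-] [b <-]; exists (a + b); rewrite exec_add. Qed.

Lemma reach_refl P s : reach P s s. Proof. by exists 0. Qed.

Lemma reach_step P s : s.1 < size P -> reach P s (step P s).
Proof. by move=> h; exists 1 => /=; rewrite h. Qed.

Lemma nth_mid (mpre post : program) i : nth (INC 0) (mpre ++ i :: post) (size mpre) = i.
Proof. by rewrite nth_cat ltnn subnn. Qed.

Lemma reach_instr mpre i post R s' :
  step (mpre ++ i :: post) (size mpre, R) = s' ->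
  reach (mpre ++ i :: post) (size mpre, R) s'.
Proof.
move=> <-; apply: reach_step; rewrite size_cat /=; lia.
Qed.

Lemma comp_ok c R R' : bs c R R' -> noZ c -> R 1 = 0 ->
  forall mpre post, reach (mpre ++ compile (size mpre) c ++ post) (size mpre, R) (size mpre + csize c, R').
Proof.
elim=> /=.
- by move=> R0 _ _ mpre post; rewrite addn0; apply: reach_refl.
- move=> r R0 _ _ mpre post; apply: reach_instr.
  by rewrite /step nth_mid addn1.
- move=> a b R0 R1 R2 ba IHa bb IHb /andP[na nb] z mpre post.
  have z1 : R1 1 = 0 by rewrite (bs_noZ ba na).
  rewrite -catA; apply: reach_trans (IHa na z mpre _) _.
  have := IHb nb z1 (mpre ++ compile (size mpre) a) post.
  by rewrite size_cat size_comp -catA -addnA.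
- move=> r a b R0 R1 e ba IHa /and3P[nr na nb] z mpre post.
  set mpre' := mpre ++ DEC r (size mpre + csize b + 2) :: compile (size mpre).+1 b ++
         [:: DEC 1 (size mpre + csize b + csize a + 2)].
  have sp : size mpre' = size mpre + csize b + 2.
    by rewrite /mpre' size_cat /= size_cat size_comp /=; lia.
  have -> : mpre ++ (DEC r (size mpre + csize b + 2) :: compile (size mpre).+1 b ++
        DEC 1 (size mpre + csize b + csize a + 2) :: compile (size mpre + csize b + 2) a) ++ post
      = mpre ++ DEC r (size mpre + csize b + 2) :: (compile (size mpre).+1 b ++
        DEC 1 (size mpre + csize b + csize a + 2) :: compile (size mpre + csize b + 2) a ++ post).
    by rewrite /= -catA.
  apply: reach_trans.
    apply: reach_instr; rewrite /step nth_mid e; reflexivity.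
  have -> : mpre ++ DEC r (size mpre + csize b + 2) :: (compile (size mpre).+1 b ++
        DEC 1 (size mpre + csize b + csize a + 2) :: compile (size mpre + csize b + 2) a ++ post)
     = mpre' ++ compile (size mpre') a ++ post.
    by rewrite sp /mpre' -catA /= -catA.
  have := IHa na z mpre' post; rewrite sp.
  by have -> : size mpre + csize b + 2 + csize a = size mpre + (csize b + csize a + 2) by lia.
- move=> r a b R0 k R1 e bb IHb /and3P[nr na nb] z mpre post.
  have z1 : R1 1 = 0 by rewrite (bs_noZ bb nb) upd_neq // eq_sym.
  have -> : mpre ++ (DEC r (size mpre + csize b + 2) :: compile (size mpre).+1 b ++
        DEC 1 (size mpre + csize b + csize a + 2) :: compile (size mpre + csize b + 2) a) ++ post
      = mpre ++ DEC r (size mpre + csize b + 2) :: (compile (size mpre).+1 b ++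
        DEC 1 (size mpre + csize b + csize a + 2) :: compile (size mpre + csize b + 2) a ++ post).
    by rewrite /= -catA.
  apply: reach_trans.
    apply: reach_instr; rewrite /step nth_mid e; reflexivity.
  set pre1 := mpre ++ [:: DEC r (size mpre + csize b + 2)].
  have sp1 : size pre1 = (size mpre).+1 by rewrite size_cat addn1.
  have -> : mpre ++ DEC r (size mpre + csize b + 2) :: (compile (size mpre).+1 b ++
        DEC 1 (size mpre + csize b + csize a + 2) :: compile (size mpre + csize b + 2) a ++ post)
     = pre1 ++ compile (size pre1) b ++ (DEC 1 (size mpre + csize b + csize a + 2) ::
          compile (size mpre + csize b + 2) a ++ post).
    by rewrite sp1 /pre1 -catA.
  have z0 : upd R0 r k 1 = 0 by rewrite upd_neq // eq_sym.
  have h1 := IHb nb z0 pre1 (DEC 1 (size mpre + csize b + csize a + 2) ::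
          compile (size mpre + csize b + 2) a ++ post).
  apply: reach_trans; first by rewrite -sp1; exact: h1.
  rewrite catA.
  have sp2 : size (pre1 ++ compile (size pre1) b) = (size pre1 + csize b) by rewrite size_cat size_comp.
  rewrite -sp2; apply: reach_instr.
  rewrite /step nth_mid z1; congr (_, _); lia.
- move=> r a R0 e _ _ mpre post.
  rewrite -catA /=; apply: reach_instr; rewrite /step nth_mid e; congr (_, _); lia.
- move=> r a R0 k R1 R2 e ba IHa bf IHf H z mpre post.
  case/andP: (H) => nr na.
  have z0 : upd R0 r k 1 = 0 by rewrite upd_neq // eq_sym.
  have z1 : R1 1 = 0 by rewrite (bs_noZ ba na).
  apply: reach_trans _ (IHf H z1 mpre post).
  have -> : mpre ++ (DEC r (size mpre + csize a + 2) :: compile (size mpre).+1 a ++ [:: DEC 1 (size mpre)]) ++ post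
     = mpre ++ DEC r (size mpre + csize a + 2) :: (compile (size mpre).+1 a ++ DEC 1 (size mpre) :: post).
    by rewrite /= -catA.
  apply: reach_trans.
    apply: reach_instr; rewrite /step nth_mid e; reflexivity.
  set pre1 := mpre ++ [:: DEC r (size mpre + csize a + 2)].
  have sp1 : size pre1 = (size mpre).+1 by rewrite size_cat addn1.
  have -> : mpre ++ DEC r (size mpre + csize a + 2) :: (compile (size mpre).+1 a ++ DEC 1 (size mpre) :: post)
     = pre1 ++ compile (size pre1) a ++ (DEC 1 (size mpre) :: post).
    by rewrite sp1 /pre1 -catA.
  have h1 := IHa na z0 pre1 (DEC 1 (size mpre) :: post).
  apply: reach_trans; first by rewrite -sp1; exact: h1.
  rewrite catA.
  have sp2 : size (pre1 ++ compile (size pre1) a) = (size pre1 + csize a) by rewrite size_cat size_comp.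
  rewrite -sp2; apply: reach_instr.
  by rewrite /step nth_mid z1.
Qed.

Ltac ext := let x := fresh "x" in apply: functional_extensionality => x; rewrite /upd /=;
  rewrite ?eqxx; repeat (case: eqP => ?; try subst); try lia.

Ltac regv := rewrite /upd /= ?eqxx; repeat (case: eqP => ?; try subst); try lia.

Lemma bs_eq c R R1 R2 : bs c R R1 -> R1 = R2 -> bs c R R2.
Proof. by move=> h <-. Qed.

Definition incs (ds : seq nat) := foldr (fun d c => cSeq (cInc d) c) cSkip ds.
Definition forInc r ds := cFor r (incs ds).

Lemma bs_incs ds R : bs (incs ds) R (fun x => R x + count_mem x ds).
Proof.
elim: ds R => [|d ds IH] R /=.
  by apply: bs_eq (bsSkip R) _; ext.
apply: bsSeq (bsInc _ _) _; apply: bs_eq (IH _) _; ext.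
Qed.

Lemma bs_forInc r ds R : r \notin ds ->
  bs (forInc r ds) R (fun x => if x == r then 0 else R x + count_mem x ds * R r).
Proof.
rewrite /forInc => nr; move eq_n : (R r) => n; elim: n R eq_n => [|n IH] R e.
  apply: bs_eq (bsFor0 _ e) _; apply: functional_extensionality => x.
  rewrite /=; case: eqP => [->|_]; [by rewrite e|by rewrite muln0 addn0].
have e0 := e; apply: bsForS e0 (bs_incs _ _) _.
have e1 : (fun x => upd R r n x + count_mem x ds) r = n.
  by rewrite /= upd_eq; have /count_memPn -> := nr; rewrite addn0.
apply: bs_eq (IH _ e1) _; apply: functional_extensionality => x /=.
case: eqP => // /eqP nx; rewrite upd_neq //; lia.
Qed.

Lemma bs_For_iter r mbody (h : regs -> regs) (Pr : regs -> Prop) :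
  (forall R, Pr R -> bs mbody R (h R) /\ Pr (h R)) ->
  (forall R v, h (upd R r v) = upd (h R) r v) ->
  (forall R v, Pr R -> Pr (upd R r v)) ->
  forall n R, R r = n -> Pr R -> bs (cFor r mbody) R (iter n h (upd R r 0)).
Proof.
move=> hb hc hp; elim=> [|n IH] R e pr.
  apply: bs_eq (bsFor0 _ e) _; ext.
have [b1 p1] := hb _ (hp R n pr).
apply: bsForS e b1 _.
have e1 : h (upd R r n) r = n by rewrite hc upd_eq.
apply: bs_eq (IH _ e1 p1) _.
rewrite iterSr; congr iter.
have -> : upd R r 0 = upd (upd R r n) r 0 by ext.
by rewrite -hc.
Qed.

(* basic macros; register 2 is a temp *)
Definition mv r d := forInc r [:: d].
Lemma bs_mv r d R : r <> d -> bs (mv r d) R (upd (upd R r 0) d (R d + R r)).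
Proof.
move=> h; apply: bs_eq (bs_forInc _ _) _; first by rewrite !inE; lia.
ext.
Qed.

Definition mcopy r d := cSeq (forInc r [:: d; 2]) (forInc 2 [:: r]).
Lemma bs_copy r d R : r <> d -> r <> 2 -> d <> 2 -> R 2 = 0 ->
  bs (mcopy r d) R (upd R d (R d + R r)).
Proof.
move=> h1 h2 h3 z.
apply: bsSeq (bs_forInc _ _) _; first by rewrite !inE; lia.
apply: bs_eq (bs_forInc _ _) _; first by rewrite !inE; lia.
ext.
Qed.

Definition dblc c := cSeq (forInc c [:: 2; 2]) (forInc 2 [:: c]).
Lemma bs_dblc c R : c <> 2 -> R 2 = 0 -> bs (dblc c) R (upd R c (R c).*2).
Proof.
move=> h1 z.
apply: bsSeq (bs_forInc _ _) _; first by rewrite !inE; lia.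
apply: bs_eq (bs_forInc _ _) _; first by rewrite !inE; lia.
ext.
Qed.

Definition mcons a b c := cSeq (forInc b [:: c; c]) (cSeq (cInc c) (cFor a (dblc c))).
Lemma bs_cons a b c R : a <> b -> a <> c -> b <> c -> a <> 2 -> b <> 2 -> c <> 2 ->
  R 2 = 0 -> R c = 0 ->
  bs (mcons a b c) R (upd (upd (upd R b 0) c (2 ^ (R a) * (R b).*2.+1)) a 0).
Proof.
move=> ab ac bc a2 b2 c2 z zc.
apply: bsSeq (bs_forInc _ _) _; first by rewrite !inE; lia.
apply: bsSeq (bsInc _ _) _.
set R1 := upd _ _ _.
have hb : forall R', R' 2 = 0 -> bs (dblc c) R' (upd R' c (R' c).*2) /\ upd R' c (R' c).*2 2 = 0.
  by move=> R' z'; split; [apply: bs_dblc|rewrite upd_neq //; apply/eqP; lia].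
have hc : forall R' v, upd (upd R' a v) c ((upd R' a v) c).*2 = upd (upd R' c (R' c).*2) a v.
  by move=> R' v; ext.
have hp : forall R' v, R' 2 = 0 -> upd R' a v 2 = 0.
  by move=> R' v z'; rewrite upd_neq //; apply/eqP; lia.
have z1 : R1 2 = 0 by rewrite /R1; regv.
have H := @bs_For_iter a (dblc c) (fun R => upd R c (R c).*2) (fun R => R 2 = 0) hb hc hp (R1 a) R1 erefl z1.
apply: bs_eq H _.
have iterE : forall k (R' : regs), iter k (fun R => upd R c (R c).*2) R' = upd R' c (R' c * 2 ^ k).
  elim=> [|k IH] R' /=; first by ext.
  rewrite IH; ext; rewrite expnS; lia.
rewrite iterE; rewrite /R1; ext; rewrite zc /= [X in 2 ^ X](_ : _ = R a); last lia; rewrite mulnC; congr (_ * _); lia.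
Qed.

Definition mpair a b c := cSeq (mcons b 6 7) (mcons a 7 c).
Lemma bs_pair a b c R : a <> b -> a <> c -> b <> c -> 7 < a -> 7 < b -> 7 < c ->
  R 2 = 0 -> R 6 = 0 -> R 7 = 0 -> R c = 0 ->
  bs (mpair a b c) R (upd (upd (upd R a 0) b 0) c (CodeSeq.code [:: R a; R b])).
Proof.
move=> ab ac bc a7 b7 c7 z2 z6 z7 zc.
apply: bsSeq (bs_cons _ _ _ _ _ _ _ _) _ => //; try lia.
apply: bs_eq (bs_cons _ _ _ _ _ _ _ _) _; try lia; try (by regv).
rewrite /CodeSeq.code /=; ext; rewrite z6.
Qed.

Definition halve c q p := cFor c (cIf p (cInc p) (cInc q)).
Lemma bs_halve c q p R : c <> q -> c <> p -> q <> p -> R p <= 1 ->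
  bs (halve c q p) R (upd (upd (upd R c 0) q (R q + (R p + R c)./2)) p (odd (R p + R c))).
Proof.
move=> cq cp qp; move e : (R c) => n; elim: n R e => [|n IH] R e hp.
  apply: bs_eq (bsFor0 _ e) _; rewrite addn0.
  have [hp'|hp'] : R p = 0 \/ R p = 1 by lia.
    by rewrite hp' /=; ext.
  by rewrite hp' /=; ext.
have e0 := e; have [hp'|hp'] : R p = 0 \/ R p = 1 by lia.
  apply: bsForS e (bsIf0 _ _ (bsInc p _)) _; first by rewrite upd_neq //; apply/eqP; lia.
  set R1 := upd _ _ _.
  have e1 : R1 c = n by rewrite /R1; regv.
  have p1 : R1 p = 1 by rewrite /R1; regv.
  apply: bs_eq (IH R1 e1 _) _; first lia.
  rewrite p1 /R1; ext; rewrite ?hp' ?addSn ?add0n /=; try lia.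
apply: bsForS e0 (bsIfS (k:=0) _ _ (bsInc q _)) _; first by rewrite upd_neq ?hp' //; apply/eqP; lia.
set R1 := upd _ _ _.
have e1 : R1 c = n by rewrite /R1; regv.
have p1 : R1 p = 0 by rewrite /R1; regv.
apply: bs_eq (IH R1 e1 _) _; first lia.
rewrite p1 /R1; ext; rewrite ?hp' ?addSn ?add0n /=; try lia.
Qed.

Definition vbody c n := cSeq (halve c 4 5)
  (cIf 5 (cSeq (mv 4 c) (cInc n)) (cSeq (forInc 4 [:: c; c]) (cInc c))).
Definition hv c n (R : regs) : regs :=
  if odd (R c) then R else upd (upd R c (R c)./2) n (R n).+1.

Lemma bs_vbody c n R : c <> n -> 5 < c -> 5 < n -> R 4 = 0 -> R 5 = 0 ->
  bs (vbody c n) R (hv c n R).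
Proof.
move=> cn c5 n5 z4 z5.
apply: bsSeq (bs_halve _ _ _ _) _; try lia.
have hc := odd_double_half (R c); rewrite -muln2 in hc.
rewrite /hv; case: (boolP (odd (R c))) => hodd.
  apply: (@bsIfS _ _ _ _ 0); first by rewrite upd_eq z5 add0n hodd.
  apply: bsSeq (bs_forInc _ _) _; first by rewrite !inE; lia.
  apply: bs_eq (bsInc _ _) _.
  rewrite hodd in hc; ext.
apply: bsIf0; first by rewrite upd_eq z5 add0n (negbTE hodd).
eapply bsSeq; [apply: bs_mv; lia|].
apply: bs_eq (bsInc _ _) _.
rewrite (negbTE hodd) in hc; ext.
Qed.

Lemma iter_hv_odd c n j R : odd (R c) -> iter j (hv c n) R = R.
Proof. by move=> h; elim: j => //= j ->; rewrite /hv h. Qed.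

Lemma iter_hv c n x y R : c <> n -> R c = 2 ^ x * y.*2.+1 ->
  iter x (hv c n) R = upd (upd R c y.*2.+1) n (R n + x).
Proof.
move=> cn; elim: x R => [|x IH] R e.
  rewrite /= expn0 mul1n in e; ext.
rewrite iterSr.
have ho : odd (R c) = false by rewrite e expnS -mulnA oddM.
have hh : (R c)./2 = 2 ^ x * y.*2.+1 by rewrite e expnS -mulnA mul2n doubleK.
have e1 : hv c n R c = 2 ^ x * y.*2.+1 by rewrite /hv ho; regv.
rewrite (IH _ e1) /hv ho; ext.
Qed.

Definition uncons c n m := cSeq (mcopy c 3)
  (cSeq (cFor 3 (vbody c n)) (cSeq (halve c m 5) (forInc 5 [::]))).

Lemma bs_uncons c n m R x y : c <> n -> c <> m -> n <> m -> 5 < c -> 5 < n -> 5 < m ->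
  R 2 = 0 -> R 3 = 0 -> R 4 = 0 -> R 5 = 0 -> R n = 0 -> R m = 0 ->
  R c = 2 ^ x * y.*2.+1 ->
  bs (uncons c n m) R (upd (upd (upd R c 0) n x) m y).
Proof.
move=> cn cm nm c5 n5 m5 z2 z3 z4 z5 zn zm e.
eapply bsSeq; [apply: bs_copy; lia|].
set R1 := upd _ _ _.
have hb : forall R', R' 4 = 0 /\ R' 5 = 0 ->
    bs (vbody c n) R' (hv c n R') /\ (hv c n R' 4 = 0 /\ hv c n R' 5 = 0).
  move=> R' [a4 a5]; split; first by apply: bs_vbody.
  by rewrite /hv; case: ifP => _; split; regv.
have hc : forall R' v, hv c n (upd R' 3 v) = upd (hv c n R') 3 v.
  move=> R' v; rewrite /hv upd_neq; last by apply/eqP; lia.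
  case: ifP => _ //; ext.
have hp : forall R' v, R' 4 = 0 /\ R' 5 = 0 -> upd R' 3 v 4 = 0 /\ upd R' 3 v 5 = 0.
  by move=> R' v [a4 a5]; split; regv.
have p1 : R1 4 = 0 /\ R1 5 = 0 by split; rewrite /R1; regv.
apply: bsSeq (@bs_For_iter 3 (vbody c n) (hv c n) (fun R => R 4 = 0 /\ R 5 = 0) hb hc hp (R1 3) R1 erefl p1) _.
have -> : upd R1 3 0 = R by rewrite /R1; ext.
have -> : R1 3 = R c by rewrite /R1; regv.
have xle : x <= R c.
  rewrite e; apply: leq_trans (ltnW (ltn_expl x (ltnSn 1))) _.
  by rewrite leq_pmulr.
rewrite -(subnK xle) iterD (iter_hv cn e) iter_hv_odd; last by regv; rewrite odd_double.
apply: bsSeq (bs_halve _ _ _ _) _; try lia; first by regv.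
apply: bs_eq (bs_forInc _ _) _ => //.
have o1 : odd (y.*2.+1) by rewrite /= odd_double.
have o2 : (y.*2.+1)./2 = y by rewrite /= uphalf_double.
have o3 : y.*2 = y * 2 by rewrite muln2.
ext; rewrite ?o1 ?o2 /=; lia.
Qed.

Notation code := CodeSeq.code.

Definition Rl (a f w cur acc k : nat) : regs := fun x =>
  if x == 13 then a else if x == 14 then f else if x == 12 then w else
  if x == 16 then cur else if x == 15 then acc else if x == 19 then k else 0.

Definition mpre := cSeq (mv 0 9) (cSeq (uncons 9 10 11) (cSeq (uncons 11 12 20)
  (cSeq (uncons 10 13 11) (cSeq (uncons 11 14 20) (cSeq (mcopy 12 16) (mcopy 12 19)))))).

Ltac sc := rewrite /upd /init_regs /Rl /=; try lia; try reflexivity.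

Lemma bs_pre a f w : bs mpre (init_regs (code [:: code [:: a; f]; w])) (Rl a f w w 0 w).
Proof.
eapply bsSeq; [apply: bs_mv; lia|].
eapply bsSeq; [apply: (bs_uncons (x := code [:: a; f]) (y := code [:: w])); sc|].
eapply bsSeq; [apply: (bs_uncons (x := w) (y := 0)); sc|].
eapply bsSeq; [apply: (bs_uncons (x := a) (y := code [:: f])); sc|].
eapply bsSeq; [apply: (bs_uncons (x := f) (y := 0)); sc|].
eapply bsSeq; [apply: bs_copy; sc|].
apply: bs_eq; [apply: bs_copy; sc|].
apply: functional_extensionality => x; rewrite /upd /init_regs /Rl.
do 25 (case: x => [|x] //=).
Qed.

Definition minner := cSeq (mcopy 16 20) (cSeq (uncons 20 17 18) (cSeq (mcopy 18 21)
  (cSeq (mpair 16 17 22) (cSeq (mpair 22 18 20) (cSeq (mv 15 22) (cSeq (mcons 20 22 15) (mv 21 16))))))).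

Lemma bs_inner a f w cur x y acc k : cur = 2 ^ x * y.*2.+1 ->
  bs minner (Rl a f w cur acc k)
     (Rl a f w y (2 ^ (code [:: code [:: cur; x]; y]) * acc.*2.+1) k).
Proof.
move=> ec.
eapply bsSeq; [apply: bs_copy; sc|].
eapply bsSeq; [apply: (bs_uncons (x := x) (y := y)); sc|].
eapply bsSeq; [apply: bs_copy; sc|].
eapply bsSeq; [apply: bs_pair; sc|].
eapply bsSeq; [apply: bs_pair; sc|].
eapply bsSeq; [apply: bs_mv; sc|].
eapply bsSeq; [apply: bs_cons; sc|].
apply: bs_eq; [apply: bs_mv; sc|].
apply: functional_extensionality => z.
do 25 (case: z => [|z]; first by cbn; rewrite ?add0n).
by cbn.
Qed.

Definition mbody := cIf 16 cSkip (cSeq (cInc 16) minner).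

Lemma bs_body_nil a f w acc k : bs mbody (Rl a f w 0 acc k) (Rl a f w 0 acc k).
Proof. by apply: bsIf0 (bsSkip _). Qed.

Lemma bs_body_cons a f w x s acc k : bs mbody (Rl a f w (code (x :: s)) acc k)
  (Rl a f w (code s) (2 ^ (code [:: code [:: code (x :: s); x]; code s]) * acc.*2.+1) k).
Proof.
have pos : 0 < code (x :: s) by rewrite /= muln_gt0 expn_gt0.
apply: (@bsIfS _ _ _ _ (code (x :: s)).-1); first by rewrite /Rl /= prednK.
apply: bsSeq (bsInc _ _) _.
have -> : upd (upd (Rl a f w (code (x :: s)) acc k) 16 (code (x :: s)).-1) 16
    (upd (Rl a f w (code (x :: s)) acc k) 16 (code (x :: s)).-1 16).+1
    = Rl a f w (code (x :: s)) acc k.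
  apply: functional_extensionality => z; rewrite /upd eqxx prednK //.
  by case: eqP => // ->.
exact: bs_inner.
Qed.

Lemma bs_For_inv r b (I : nat -> regs -> Prop) :
  (forall k R, I k.+1 R -> R r = k.+1 -> exists R', bs b (upd R r k) R' /\ I k R' /\ R' r = k) ->
  forall n R, R r = n -> I n R -> exists R', bs (cFor r b) R R' /\ I 0 R'.
Proof.
move=> H; elim=> [|n IH] R e i; first by exists R; split=> //; exact: bsFor0.
have [R1 [b1 [i1 e1]]] := H n R i e.
have [R2 [b2 i2]] := IH R1 e1 i1.
by exists R2; split=> //; apply: bsForS e b1 b2.
Qed.

Lemma size_code s : size s <= code s.
Proof.
elim: s => //= x s IH.
apply: leq_trans (_ : (code s).*2.+1 <= _); first by rewrite ltnS -addnn; apply: leq_trans IH (leq_addr _ _).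
by rewrite leq_pmull // expn_gt0.
Qed.

Fixpoint build (s : seq nat) (acc : seq (nat * nat * nat)) :=
  if s is x :: s' then build s' (((code s, x), code s') :: acc) else acc.

Definition mloop := cFor 19 mbody.

Lemma bs_loop a f w xw : w = code xw ->
  bs mloop (Rl a f w w 0 w) (Rl a f w 0 (code (map pickle (build xw [::]))) 0).
Proof.
move=> ew.
pose I k R := exists s accl, R = Rl a f w (code s) (code (map pickle accl)) k /\
   size s <= k /\ build s accl = build xw [::].
have H : forall k R, I k.+1 R -> R 19 = k.+1 ->
    exists R', bs mbody (upd R 19 k) R' /\ I k R' /\ R' 19 = k.
  move=> k R [s [accl [-> [hs hb]]]] _.
  have -> : upd (Rl a f w (code s) (code (map pickle accl)) k.+1) 19 k =
            Rl a f w (code s) (code (map pickle accl)) k.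
    by apply: functional_extensionality => z; rewrite /upd /Rl; case: eqP => // ->.
  case: s hs hb => [|x s] hs hb.
    exists (Rl a f w (code [::]) (code (map pickle accl)) k); split; first exact: bs_body_nil.
    by split=> //; exists [::], accl.
  eexists; split; first exact: bs_body_cons.
  split=> //; exists s, (((code (x :: s), x), code s) :: accl); split=> //.
have i0 : I w (Rl a f w w 0 w) by exists xw, [::]; rewrite -ew; split=> //; split=> //; rewrite ew; exact: size_code.
have [R' [b' [s [accl [e' [hs hb]]]]]] := bs_For_inv H (erefl _) i0.
subst R'; case: s hs hb b' => // _ /= hb; by rewrite hb.
Qed.

Definition incn r k := iter k (cSeq (cInc r)) cSkip.
Lemma bs_incn r k R : bs (incn r k) R (upd R r (R r + k)).
Proof.
elim: k R => [|k IH] R /=.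
  by apply: bs_eq (bsSkip _) _; ext.
apply: bsSeq (bsInc _ _) _; apply: bs_eq (IH _) _; ext.
Qed.
Lemma noZ_incn r k : r != 1 -> noZ (incn r k).
Proof. by move=> h; elim: k => //= k ->; rewrite h. Qed.

Definition post1 nn :=
  cSeq (mcopy 12 20) (cSeq (mcopy 12 21) (cSeq (incn 17 nn.+1)
  (cSeq (mpair 20 17 22) (cSeq (mpair 22 21 20) (cSeq (mv 15 22) (mcons 20 22 15)))))).
Definition post2 nn :=
  cSeq (incn 17 nn) (cSeq (mpair 20 17 22) (cSeq (mpair 22 21 20) (cSeq (mv 15 22)
  (mcons 20 22 15)))).
Definition post3 :=
  cSeq (cInc 21) (cSeq (mpair 12 21 20) (cSeq (mpair 20 15 22)
  (cSeq (mpair 14 22 20) (cSeq (mpair 20 13 9) (mv 9 0))))).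

Lemma bs_post1 nn a f w accv : bs (post1 nn) (Rl a f w 0 accv 0)
  (Rl a f w 0 (2 ^ (code [:: code [:: w; nn.+1]; w]) * accv.*2.+1) 0).
Proof.
eapply bsSeq; [apply: bs_copy; sc|].
eapply bsSeq; [apply: bs_copy; sc|].
eapply bsSeq; [apply: bs_incn|].
eapply bsSeq; [apply: bs_pair; sc|].
eapply bsSeq; [apply: bs_pair; sc|].
eapply bsSeq; [apply: bs_mv; sc|].
apply: bs_eq; [apply: bs_cons; sc|].
apply: functional_extensionality => z.
Time do 25 (case: z => [|z]; first by cbn; rewrite ?add0n).
by cbn.
Qed.

Lemma bs_post2 nn a f w accv : bs (post2 nn) (Rl a f w 0 accv 0)
  (Rl a f w 0 (2 ^ (code [:: code [:: 0; nn]; 0]) * accv.*2.+1) 0).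
Proof.
eapply bsSeq; [apply: bs_incn|].
eapply bsSeq; [apply: bs_pair; sc|].
eapply bsSeq; [apply: bs_pair; sc|].
eapply bsSeq; [apply: bs_mv; sc|].
apply: bs_eq; [apply: bs_cons; sc|].
apply: functional_extensionality => z.
Time do 25 (case: z => [|z]; first by cbn; rewrite ?add0n).
by cbn.
Qed.

Lemma bs_post3 a f w accv : bs post3 (Rl a f w 0 accv 0)
  (init_regs (code [:: code [:: f; code [:: code [:: w; 1]; accv]]; a])).
Proof.
eapply bsSeq; [apply: bsInc|].
eapply bsSeq; [apply: bs_pair; sc|].
eapply bsSeq; [apply: bs_pair; sc|].
eapply bsSeq; [apply: bs_pair; sc|].
eapply bsSeq; [apply: bs_pair; sc|].
apply: bs_eq; [apply: bs_mv; sc|].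
apply: functional_extensionality => z.
Time do 25 (case: z => [|z]; first by cbn; rewrite ?add0n).
by cbn.
Qed.

Arguments incn : simpl never.

Definition mmain nn := cSeq mpre (cSeq mloop (cSeq (post1 nn) (cSeq (post2 nn) post3))).

Lemma noZ_main nn : noZ (mmain nn).
Proof. by rewrite /= !noZ_incn. Qed.

Lemma bs_main nn a f xw :
  bs (mmain nn) (init_regs (code [:: code [:: a; f]; code xw]))
    (init_regs (code [:: code [:: f; code [:: code [:: code xw; 1];
       code (map pickle (((0, nn), 0) :: ((code xw, nn.+1), code xw) :: build xw [::]))]]; a])).
Proof.
apply: bsSeq (bs_pre _ _ _) _.
apply: bsSeq (@bs_loop a f (code xw) xw erefl) _.
apply: bsSeq (bs_post1 _ _ _ _ _) _.
apply: bsSeq (bs_post2 _ _ _ _ _) _.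
exact: bs_post3.
Qed.

Definition mshift k (p : program) :=
  map (fun i => match i with INC r => INC r | DEC r j => DEC r (k + j) end) p.

Lemma exec_shift mpre p f pc R :
  exec (mpre ++ mshift (size mpre) p) f (size mpre + pc, R) =
  (size mpre + (exec p f (pc, R)).1, (exec p f (pc, R)).2).
Proof.
elim: f pc R => [|f IH] pc R //=.
rewrite size_cat size_map ltn_add2l.
case: ifP => // hpc.
rewrite /step nth_cat ltnNge leq_addr /= addKn (nth_map (INC 0)) //.
case: (nth (INC 0) p pc) => [r|r j].
  by rewrite -addnS IH.
case: (R r) => [|k].
  by rewrite IH.
by rewrite -addnS IH.
Qed.

Definition mprog nn p := compile 0 (mmain nn) ++ mshift (csize (mmain nn)) p.

Lemma prog_ok nn p a f xw out :
  halts_with p (code [:: code [:: f; code [:: code [:: code xw; 1];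
       code (map pickle (((0, nn), 0) :: ((code xw, nn.+1), code xw) :: build xw [::]))]]; a]) out ->
  halts_with (mprog nn p) (code [:: code [:: a; f]; code xw]) out.
Proof.
move=> [fuel [h1 h2]].
have := comp_ok (bs_main nn a f xw) (noZ_main nn) erefl [::] (mshift (csize (mmain nn)) p).
rewrite /= => -[f1 e1].
exists (f1 + fuel); rewrite exec_add e1.
have := exec_shift (compile 0 (mmain nn)) p fuel 0
   (init_regs (code [:: code [:: f; code [:: code [:: code xw; 1];
       code (map pickle (((0, nn), 0) :: ((code xw, nn.+1), code xw) :: build xw [::]))]]; a])).
rewrite size_comp addn0 => ->.
rewrite /mprog size_cat size_map size_comp /= leq_add2l; split=> //.
Qed.

Lemma catsI' (T : eqType) (p p' s : seq T) : p ++ s = p' ++ s -> p = p'.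
Proof.
move=> e; have hs : size p = size p' by have := congr1 size e; rewrite !size_cat; lia.
by rewrite -(take_size_cat s (erefl (size p))) e take_size_cat.
Qed.

Lemma code_inj s1 s2 : CodeSeq.code s1 = CodeSeq.code s2 -> s1 = s2.
Proof. exact: (can_inj CodeSeq.codeK). Qed.
Lemma code0 s : code s = 0 -> s = [::].
Proof. by case: s => //= x s /eqP; rewrite muln_eq0 expn_eq0. Qed.

Lemma run_cat tr p q r u v : run tr p u q -> run tr q v r -> run tr p (u ++ v) r.
Proof.
elim: u p => [|x u IH] p /=; first by move=> ->.
by move=> [p' [h1 h2]] h3; exists p'; split=> //; apply: IH h2 h3.
Qed.

Lemma run_nseq tr q l k : (q, l, q) \in tr -> run tr q (nseq k l) q.
Proof. by move=> h; elim: k => //= k IH; exists q. Qed.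

Lemma run_word k tr q v q' : run tr q v q' -> all (fun e => e.1.2 < k) tr -> word_over k v.
Proof.
elim: v q => //= x v IH q [p' [h1 h2]] ha.
by rewrite (IH _ h2 ha) andbT; have := allP ha _ h1.
Qed.

Lemma build_sub t s acc : t \in acc -> t \in build s acc.
Proof. by elim: s acc => //= x s IH acc h; apply: IH; rewrite inE h orbT. Qed.

Lemma build_mem p y s acc :
  ((code (y :: s), y), code s) \in build (p ++ y :: s) acc.
Proof.
elim: p acc => [|z p IH] acc /=; last exact: IH.
by apply: build_sub; rewrite inE eqxx.
Qed.

Lemma mem_build t s acc : t \in build s acc ->
  t \in acc \/ exists p y s', s = p ++ y :: s' /\ t = ((code (y :: s'), y), code s').
Proof.
elim: s acc => [|y s IH] acc /=; first by left.
move=> /IH [|[p [y' [s' [e1 e2]]]]].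
  rewrite inE => /orP[/eqP ->|]; last by left.
  by right; exists [::], y, s.
by right; exists (y :: p), y', s'; rewrite e1.
Qed.

Definition Bnfa (nn : nat) (xw : word) : nfa :=
  ((code xw, [:: 0]), ((0, nn), 0) :: ((code xw, nn.+1), code xw) :: build xw [::]).

Lemma run_chain nn xw s p : xw = p ++ s -> run (Bnfa nn xw).2 (code s) s 0.
Proof.
elim: s p => [|y s IH] p e //=.
exists (code s); split; last by apply: (IH (rcons p y)); rewrite e cat_rcons.
by rewrite !inE e build_mem !orbT.
Qed.

Lemma Bnfa_over nn xw : word_over nn xw -> nfa_over nn.+2 (Bnfa nn xw).
Proof.
move=> hw; rewrite /nfa_over /=; rewrite !ltnS leqnn ltnW //=.
apply/allP => t /mem_build [//|[p [y [s' [e ->]]]]] /=.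
have : y \in xw by rewrite e mem_cat inE eqxx orbT.
by move/(allP hw) => /= h; lia.
Qed.

Lemma aut1 T (G : group_str T) f : is_aut G f -> f (gone G) = gone G.
Proof.
move=> [hom _]; have h := hom (gone G) (gone G); rewrite gmul1g in h.
have : gmul G (ginv G (f (gone G))) (f (gone G)) =
       gmul G (ginv G (f (gone G))) (gmul G (f (gone G)) (f (gone G))) by rewrite -h.
by rewrite gmulA gmulVg gmul1g.
Qed.

Lemma iter_aut1 T (G : group_str T) f k : is_aut G f -> iter k f (gone G) = gone G.
Proof. by move=> h; elim: k => //= k ->; rewrite aut1. Qed.

Definition stp T (G : group_str T) gens := fun a x => gmul G a (letterG G gens x).

Lemma sd_G T (G : group_str T) gens f v st st' :
  sd_run G gens f v st st' -> word_over (2 * size gens) v ->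
  st' = (st.1, foldl (stp G gens) st.2 v).
Proof.
elim: v st => [|x v IH] st /=; first by move=> ->; case: st.
move=> [s'' [hs hr]] /andP[hx hv].
move: hs; rewrite /sd_step hx => -[e1 e2].
rewrite (IH _ hr hv) e1 e2; by case: st e1 e2.
Qed.

Lemma sd_G_run T (G : group_str T) gens f w e y :
  word_over (2 * size gens) w ->
  sd_run G gens f w (e, y) (e, foldl (stp G gens) y w).
Proof.
elim: w y => [|x w IH] y //= /andP[hx hw].
by exists (e, gmul G y (letterG G gens x)); split; [rewrite /sd_step hx|apply: IH].
Qed.

Lemma sd_cat T (G : group_str T) gens f u v s s' s'' :
  sd_run G gens f u s s' -> sd_run G gens f v s' s'' -> sd_run G gens f (u ++ v) s s''.
Proof.
elim: u s => [|x u IH] s /=; first by move=> ->.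
by move=> [t [h1 h2]] h3; exists t; split=> //; apply: IH h2 h3.
Qed.

Lemma sd_t T (G : group_str T) gens f k e y :
  sd_run G gens f (nseq k (2 * size gens)) (e, y) ((e + k%:Z)%R, iter k f y).
Proof.
elim: k e y => [|k IH] e y /=; first by rewrite GRing.addr0.
exists ((e + 1)%R, f y); split.
  by rewrite /sd_step ltnn eqxx.
have -> : (e + k.+1%:Z)%R = ((e + 1) + k%:Z)%R by lia.
by rewrite -iterS iterSr; apply: IH.
Qed.

Lemma sd_tinv T (G : group_str T) gens f k e :
  f (gone G) = gone G ->
  sd_run G gens f (nseq k (2 * size gens).+1) (e, gone G) ((e - k%:Z)%R, gone G).
Proof.
move=> f1; elim: k e => [|k IH] e /=; first by rewrite GRing.subr0.
exists ((e - 1)%R, gone G); split.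
  have h1 : ((2 * size gens).+1 < 2 * size gens) = false by lia.
  have h2 : ((2 * size gens).+1 == 2 * size gens) = false by lia.
  by rewrite /sd_step h1 h2 eqxx f1.
have -> : (e - k.+1%:Z)%R = ((e - 1) - k%:Z)%R by lia.
exact: IH.
Qed.

Definition Inv T (G : group_str T) gens f xw (q : nat) (st : int * T) : Prop :=
  exists p s, xw = p ++ s /\ q = code s /\ exists i j : nat,
    st.1 = (j%:Z - i%:Z)%R /\ st.2 = iter j f (evalG G gens p) /\ (s != [::] -> j = 0).

Lemma Inv_step T (G : group_str T) gens f xw q l q' st st' :
  is_aut G f -> word_over (2 * size gens) xw ->
  (q, l, q') \in (Bnfa (2 * size gens) xw).2 -> sd_step G gens f l st st' ->
  Inv G gens f xw q st -> Inv G gens f xw q' st'.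
Proof.
set nn := 2 * size gens => ha hw.
have f1 := aut1 ha.
have finj : injective f by case: ha => _ /bij_inj.
rewrite inE => /orP[/eqP [-> -> ->]|].
  rewrite /sd_step ltnn eqxx => -[h1 h2] [p [s [e1 [/esym/code0 e2 [i [j [e3 [e4 _]]]]]]]].
  exists p, s; split=> //; split; first by rewrite e2.
  exists i, j.+1; split; first by rewrite h1 e3; lia.
  by split; [rewrite h2 e4|rewrite e2].
rewrite inE => /orP[/eqP [-> -> ->]|].
  have h1 : (nn.+1 < nn) = false by lia.
  have h2 : (nn.+1 == nn) = false by lia.
  rewrite /sd_step -/nn h1 h2 eqxx => -[h3 h4] [p [s [e1 [e2' [i [j [e3 [e4 e5]]]]]]]].
  have e2 := code_inj e2'; subst s; have ep : p = [::] by apply: (@catsI' _ _ _ xw); rewrite -e1.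
  subst p.
  exists [::], xw; split=> //; split=> //.
  exists i.+1, j; split; first by rewrite h3 e3; lia.
  split=> //; apply: finj; rewrite h4 e4 /= iter_aut1 // f1.
move=> /mem_build [//|[p' [y [s' [e [[-> ->] ->]]]]]].
move=> hs [p [s [e1 [e2' [i [j [e3 [e4 e5]]]]]]]].
have e2 := @code_inj (y :: s') s e2'; subst s; have ep : p = p' by apply: (@catsI' _ _ _ (y :: s')); rewrite -e1 -e.
subst p'; have j0 := e5 isT; subst j.
have hy : y < nn by apply: (allP hw); rewrite e mem_cat inE eqxx orbT.
move: hs; rewrite /sd_step -/nn hy => -[h1 h2].
exists (rcons p y), s'; split; first by rewrite e cat_rcons.
split=> //; exists i, 0; split; first by rewrite h1 e3.
split=> //; by rewrite h2 e4 /= /evalG foldl_rcons.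
Qed.

Lemma Inv_run T (G : group_str T) gens f xw u q qf st st' :
  is_aut G f -> word_over (2 * size gens) xw ->
  run (Bnfa (2 * size gens) xw).2 q u qf -> sd_run G gens f u st st' ->
  Inv G gens f xw q st -> Inv G gens f xw qf st'.
Proof.
move=> ha hw; elim: u q st => [|x u IH] q st /=; first by move=> -> ->.
move=> [q1 [hq hr]] [s1 [hs hs']] hi.
exact: IH hr hs' (Inv_step ha hw hq hs hi).
Qed.

Definition Fred (nn : nat) (x : GBrP_instance) : IP_instance := ((x.1.2, Bnfa nn x.2), x.1.1).

Lemma valid_F T (G : group_str T) gens x :
  GBrP_valid G gens x -> IP_valid G gens (Fred (2 * size gens) x).
Proof.
case=> [hA [hphi hw]]; split=> //; split; first exact: Bnfa_over.
by apply: sub_all hA => e /= h; lia.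
Qed.

Lemma answer_F T (G : group_str T) gens x :
  GBrP_valid G gens x ->
  (IP_answer G gens (Fred (2 * size gens) x) <-> GBrP_answer G gens x).
Proof.
case: x => [[A phiw] xw] [hA [hphi hw]] /=; split.
  move=> [f [rep [u [v [s [[q qin ru] [[q' qin' rv] [su sv]]]]]]]].
  have ha := rep.1.
  have i0 : Inv G gens f xw (code xw) (0%R, gone G).
    by exists [::], xw; split=> //; split=> //; exists 0, 0.
  have := Inv_run ha hw ru su i0.
  move: qin; rewrite inE => /eqP ->.
  move=> [p [s1 [e1 [/esym/code0 e2 [i [j [e3 [e4 _]]]]]]]].
  subst s1; rewrite cats0 in e1; subst p.
  have hv := run_word rv hA.
  have es := sd_G sv hv.
  exists f; split=> //; exists j, v; split; first by exists q'.
  rewrite es /= in e3 e4; rewrite -e4 //.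
move=> [f [rep [k [w [[q qin rw] ew]]]]].
have ha := rep.1.
have hv := run_word rw hA.
exists f; split=> //.
exists (nseq k (2 * size gens).+1 ++ xw ++ nseq k (2 * size gens)), w, (0%R, evalG G gens w).
split.
  exists 0; first by rewrite inE.
  apply: run_cat (run_nseq _ _) _; first by rewrite !inE eqxx orbT.
  apply: run_cat (@run_chain (2 * size gens) xw xw [::] erefl) _.
  by apply: run_nseq; rewrite inE eqxx.
split; first by exists q.
split; last by apply: sd_G_run.
eapply sd_cat; first by apply: sd_tinv; exact: aut1 ha.
eapply sd_cat; first by apply: sd_G_run.
have := @sd_t T G gens f k (0 - k%:Z)%R (foldl (stp G gens) (gone G) xw).
have -> : (0 - k%:Z + k%:Z)%R = 0%R by lia.
by rewrite ew.
Qed.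

Lemma pickle_word (xw : word) : pickle xw = CodeSeq.code xw.
Proof. by rewrite /= /pickle_seq; congr CodeSeq.code; elim: xw => //= x xw ->. Qed.

Theorem proposition5p2 (T : Type) (G : group_str T) (gens : seq T) :
  generates G gens ->
  IP_Rat_SD_decidable G gens -> GBrP_Rat_decidable G gens.
Proof.
move=> _ [p Hp]; exists (mprog (2 * size gens) p) => x vx.
have [b [hb eb]] := Hp _ (valid_F vx).
exists b; split; last by rewrite eb answer_F.
have -> : pickle x = CodeSeq.code [:: CodeSeq.code [:: pickle x.1.1; pickle x.1.2]; CodeSeq.code x.2].
  by rewrite -(pickle_word x.2).
exact: prog_ok hb.
Qed.
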